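(* Let $u\neq0$, $v$ be parameters and let $\mathrm{e}(y\mathrm{T}_{u^{-1}}\mathbf{D}_{s,t},v)=\sum_{n\ge0}v^{\binom{n}{2}}\frac{y^n}{\{n\}_{s,t}!}(\mathrm{T}_{u^{-1}}\mathbf{D}_{s,t})^n$, acting on the variable $x$. Then (1) for every $\alpha$ (with the convention $\mathbf{D}_{s,t}x^{\beta}=\{\beta\}_{s,t}x^{\beta-1}$ for all exponents $\beta$), as formal series in $y$, $$\mathrm{e}(y\mathrm{T}_{u^{-1}}\mathbf{D}_{s,t},v)\,\big\{u^{\binom{\alpha}{2}}x^{\alpha}\big\}=(x\oplus_{u,v}y)_{s,t}^{(\alpha)};$$ (2) $\mathrm{e}(y\mathrm{T}_{u^{-1}}\mathbf{D}_{s,t},v)\exp_{s,t}(x,u)=\exp_{s,t}(x\oplus_{u,v}y)$, where $\exp_{s,t}(x,u)=\sum_{n\ge0}u^{\binom n2}\frac{x^n}{\{n\}_{s,t}!}$ and $\exp_{s,t}(x\oplus_{u,v}y)=\sum_{n\ge0}\frac{(x\oplus_{u,v}y)^{(n)}_{s,t}}{\{n\}_{s,t}!}$.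
   Context: Let $s,t$ be nonzero reals with $s^2+4t\neq0$, $\varphi=\frac{s+\sqrt{s^2+4t}}{2}$, $\varphi'=\frac{s-\sqrt{s^2+4t}}{2}$, and for a complex exponent $\beta$ (fixed branch of powers) $\{\beta\}_{s,t}=\frac{\varphi^\beta-\varphi'^\beta}{\varphi-\varphi'}$; $\{n\}_{s,t}!=\{1\}_{s,t}\cdots\{n\}_{s,t}$, $\{0\}_{s,t}!=1$; $\left\{{\alpha\atop k}\right\}_{s,t}=\frac{\{\alpha\}_{s,t}\{\alpha-1\}_{s,t}\cdots\{\alpha-k+1\}_{s,t}}{\{k\}_{s,t}!}$; $\binom{\beta}{2}=\beta(\beta-1)/2$. $\mathbf{D}_{s,t}$ is the $(s,t)$-derivative, $\mathbf{D}_{s,t}f(x)=\frac{f(\varphi x)-f(\varphi'x)}{(\varphi-\varphi')x}$, and $\mathrm{T}_af(x)=f(ax)$. The deformed binomial series is $(x\oplus_{u,v}y)_{s,t}^{(\alpha)}=\sum_{n\geq0}\left\{{\alpha\atop n}\right\}_{s,t}u^{\binom{\alpha-n}{2}}v^{\binom{n}{2}}x^{\alpha-n}y^n$. *)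

(* Defs.v *)
From mathcomp Require Import all_boot all_order all_algebra.
From mathcomp Require Import all_classical all_reals all_analysis.
From mathcomp Require Export complex.
Export GRing.Theory Num.Theory.

Set Implicit Arguments.
Unset Strict Implicit.
Unset Printing Implicit Defensive.

Local Open Scope ring_scope.
Local Open Scope complex_scope.

Section Defs.
Variable R : realType.
Local Notation C := R[i].

(* complex exponential and principal logarithm, argument in (-pi, pi] *)
Definition cexp (z : C) : C :=
  (expR (complex.Re z))%:C * ((cos (complex.Im z))%:C + 'i * (sin (complex.Im z))%:C).

Definition cmod (z : C) : R := Num.sqrt (complex.Re z ^+ 2 + complex.Im z ^+ 2).

Definition carg (z : C) : R :=
  if 0 <= complex.Im z then acos (complex.Re z / cmod z)
  else - acos (complex.Re z / cmod z).

Definition cLog (z : C) : C := (ln (cmod z))%:C + 'i * (carg z)%:C.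

Definition cpow (z beta : C) : C := if z == 0 then 0 else cexp (beta * cLog z).

Definition cbin2 (beta : C) : C := beta * (beta - 1) / 2%:R.

Definition sqdisc (s t : R) : C :=
  let d := s ^+ 2 + 4%:R * t in
  if 0 <= d then (Num.sqrt d)%:C else 'i * (Num.sqrt (- d))%:C.

Definition phi (s t : R) : C := (s%:C + sqdisc s t) / 2%:R.
Definition phi' (s t : R) : C := (s%:C - sqdisc s t) / 2%:R.

Definition stnum (s t : R) (beta : C) : C :=
  (cpow (phi s t) beta - cpow (phi' s t) beta) / (phi s t - phi' s t).

Definition stfact (s t : R) (n : nat) : C := \prod_(k < n) stnum s t (k.+1)%:R.

Definition stbinom (s t : R) (alpha : C) (k : nat) : C :=
  (\prod_(i < k) stnum s t (alpha - i%:R)) / stfact s t k.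

(* A formal (generalized) series in x, sum_delta F(delta) x^delta, is
   represented by its coefficient function F : C -> C (delta ranges over
   all complex exponents).  A formal power series in y with such coefficients
   is a function nat -> (C -> C). *)
Definition xser := C -> C.

Definition mono (c gamma : C) : xser := fun delta => if delta == gamma then c else 0.

Definition Dst (s t : R) (F : xser) : xser :=
  fun delta => stnum s t (delta + 1) * F (delta + 1).

(* T_{u^{-1}} : x^delta |-> (u^{-1} x)^delta = u^{-delta} x^delta *)
Definition Tinv (u : C) (F : xser) : xser := fun delta => cpow u (- delta) * F delta.

(* e(y T_{u^{-1}} D_{s,t}, v) F : the coefficient of y^n is
   v^binom(n,2) / {n}! (T_{u^{-1}} D_{s,t})^n F *)
Definition eop (s t : R) (u v : C) (F : xser) : nat -> xser :=
  fun n delta =>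
    v ^+ 'C(n, 2) / stfact s t n * iter n (fun G => Tinv u (Dst s t G)) F delta.

(* (x (+)_{u,v} y)^{(alpha)}_{s,t}: coefficient of y^n *)
Definition defbinom (s t : R) (u v alpha : C) : nat -> xser :=
  fun n => mono (stbinom s t alpha n * cpow u (cbin2 (alpha - n%:R)) * v ^+ 'C(n, 2))
                (alpha - n%:R).

(* sum of a family of scalars in which only finitely many terms are nonzero
   (formal summation of a locally finite family); 0 if not locally finite *)
Definition lfsum (a : nat -> C) : C :=
  match pselect (exists N : nat, forall n, (N <= n)%N -> a n = 0) with
  | left H => \sum_(n < projT1 (cid H)) a n
  | right _ => 0
  end.

Definition expst (s t : R) (u : C) : xser :=
  fun delta => lfsum (fun n => mono (u ^+ 'C(n, 2) / stfact s t n) n%:R delta).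

Definition expoplus (s t : R) (u v : C) : nat -> xser :=
  fun m delta => lfsum (fun n => defbinom s t u v n%:R m delta / stfact s t n).

End Defs.

(* Main.v *)
Require Import Defs.
From mathcomp Require Import all_boot all_order all_algebra.
From mathcomp Require Import all_classical all_reals all_analysis.
From mathcomp Require Import complex.
From mathcomp Require Import ring lra.
Import Order.TTheory GRing.Theory Num.Theory.
Local Open Scope ring_scope.
Local Open Scope complex_scope.
Section S. Variable R : realType.
Local Notation C := R[i].
Lemma cexpD (a b : C) : cexp a * cexp b = cexp (a + b).
Proof.
case: a => a1 a2; case: b => b1 b2; rewrite /cexp /= expRD cosD sinD.
apply/eqP; rewrite eq_complex /=; apply/andP; split; apply/eqP; ring.
Qed.
Lemma cexp0 : cexp (0:C) = 1.
Proof. rewrite /cexp /= expR0 cos0 sin0; apply/eqP; rewrite eq_complex /=; apply/andP; split; apply/eqP; ring. Qed.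
Lemma cexpLog (u : C) : u != 0 -> cexp (cLog u) = u.
Proof.
case: u => a b nz.
have hab : 0 < a ^+ 2 + b ^+ 2.
  have : (a +i* b) != 0 := nz.
  rewrite eq_complex /= negb_and => H.
  have sq0 : forall x : R, x != 0 -> 0 < x ^+ 2.
    by move=> x hx; rewrite lt0r sqr_ge0 andbT expf_neq0.
  case/orP: H => [/sq0|/sq0] h; have := sqr_ge0 a; have := sqr_ge0 b; lra.
set m := cmod (a +i* b).
have mE : m = Num.sqrt (a ^+ 2 + b ^+ 2) by [].
have m0 : 0 < m by rewrite mE sqrtr_gt0.
have m2 : m ^+ 2 = a ^+ 2 + b ^+ 2 by rewrite mE sqr_sqrtr // ltW.
have ReL : complex.Re (cLog (a +i* b)) = ln m by rewrite /cLog /=; ring.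
have ImL : complex.Im (cLog (a +i* b)) = carg (a +i* b) by rewrite /cLog /=; ring.
have bnd : -1 <= a / m <= 1.
  have : (a / m) ^+ 2 <= 1.
    rewrite expr_div_n ler_pdivrMr ?exprn_gt0 // mul1r m2; nra.
  move=> h; apply/andP; split; nra.
have sq : Num.sqrt (1 - (a / m) ^+ 2) = `|b| / m.
  have -> : 1 - (a / m) ^+ 2 = (b / m) ^+ 2.
    rewrite !expr_div_n m2; field; apply/eqP => h; lra.
  by rewrite sqrtr_sqr normrM (gtr0_norm (x := m^-1)) // invr_gt0.
rewrite /cexp ReL ImL lnK ?posrE // /carg /=.
have cA : cos (acos (a / m)) = a / m by case: (acos_def bnd).
have sA : sin (acos (a / m)) = `|b| / m by rewrite sin_acos.
case: ifP => hb.
  rewrite cA sA ger0_norm //.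
  apply/eqP; rewrite eq_complex /=; apply/andP; split; apply/eqP; field; apply/eqP => h; lra.
rewrite cosN sinN cA sA ltr0_norm; last by rewrite ltNge hb.
apply/eqP; rewrite eq_complex /=; apply/andP; split; apply/eqP; field; apply/eqP => h; lra.
Qed.

Lemma cpowE (u z : C) : u != 0 -> cpow u z = cexp (z * cLog u).
Proof. by move=> nz; rewrite /cpow (negbTE nz). Qed.

Lemma cpowD (u a b : C) : u != 0 -> cpow u a * cpow u b = cpow u (a + b).
Proof. by move=> nz; rewrite !cpowE // cexpD mulrDl. Qed.

Lemma cpow_nat (u : C) n : u != 0 -> cpow u n%:R = u ^+ n.
Proof.
move=> nz; elim: n => [|n IH].
  by rewrite cpowE // mul0r cexp0.
by rewrite -natr1 -cpowD // IH exprSr cpowE // mul1r cexpLog.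
Qed.

Lemma two_neq0 : (2%:R : C) != 0.
Proof. by rewrite pnatr_eq0. Qed.

Lemma cbin2_nat n : cbin2 (n%:R : C) = 'C(n, 2)%:R.
Proof.
elim: n => [|n IH]; first by rewrite /cbin2 mul0r mul0r.
rewrite binS bin1 natrD -IH /cbin2 -natr1.
by field.
Qed.

Lemma cbin2_step (x : C) : cbin2 (x - 1) = cbin2 x + - (x - 1).
Proof. rewrite /cbin2; by field. Qed.

Definition PP (s t : R) (u : C) (m : nat) (d : C) : C :=
  \prod_(i < m) (cpow u (- (d + i%:R)) * stnum s t (d + i%:R + 1)).

Lemma PP_recl s t u m d :
  PP s t u m.+1 d = cpow u (- d) * stnum s t (d + 1) * PP s t u m (d + 1).
Proof.
rewrite /PP big_ord_recl /= addr0; congr (_ * _).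
apply: eq_bigr => i _; rewrite /bump /= add1n -natr1.
congr (cpow u _ * stnum s t _); ring.
Qed.

Lemma iter_pt s t u m F d :
  iter m (fun G => Tinv u (Dst s t G)) F d = PP s t u m d * F (d + m%:R).
Proof.
elim: m d => [|m IH] d; first by rewrite /PP big_ord0 mul1r addr0.
rewrite iterS /Tinv /Dst IH PP_recl -natr1.
rewrite !mulrA; congr (_ * F _); ring.
Qed.

Lemma core s t u m (alpha : C) : u != 0 ->
  PP s t u m (alpha - m%:R) * cpow u (cbin2 alpha) =
  (\prod_(i < m) stnum s t (alpha - i%:R)) * cpow u (cbin2 (alpha - m%:R)).
Proof.
move=> nz; elim: m => [|m IH]; first by rewrite /PP !big_ord0 subr0.
have -> : alpha - m.+1%:R = (alpha - m%:R) - 1 by rewrite -natr1; ring.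
rewrite PP_recl subrK -mulrA IH big_ord_recr /=.
rewrite cbin2_step -cpowD //.
ring.
Qed.

Lemma lfsum_single (a : nat -> C) n0 :
  (forall n, n != n0 -> a n = 0) -> lfsum a = a n0.
Proof.
move=> hl; rewrite /lfsum; case: pselect => [H|H]; last first.
  exfalso; apply: H; exists n0.+1 => n hn; apply: hl.
  by apply/eqP => e; rewrite e ltnn in hn.
case: (cid H) => N HN /=.
have [lt|ge] := ltnP n0 N.
  rewrite (bigD1 (Ordinal lt)) //= big1 ?addr0 // => i ne; apply: hl.
  by apply: contra ne => /eqP e; apply/eqP; apply: val_inj.
rewrite HN // big1 // => i _; apply: hl.
by apply/eqP => e; have := ltn_ord i; rewrite e ltnNge ge.
Qed.
End S.

Theorem mainTheorem5 (R : realType) (s t : R) (u v : R[i]) :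
  s != 0 -> t != 0 -> s ^+ 2 + 4%:R * t != 0 -> u != 0 ->
  (forall alpha : R[i],
     eop s t u v (mono (cpow u (cbin2 alpha)) alpha) = defbinom s t u v alpha)
  /\ eop s t u v (expst s t u) = expoplus s t u v.
Proof.
move=> _ _ _ nz; split.
  move=> alpha; apply: funext => n; apply: funext => d.
  rewrite /eop /defbinom /mono iter_pt.
  have [->|ne] := eqVneq d (alpha - n%:R).
    rewrite subrK eqxx core // /stbinom; ring.
  have -> : (d + n%:R == alpha) = false.
    by rewrite eq_sym -subr_eq eq_sym (negbTE ne).
  by rewrite !mulr0.
apply: funext => m; apply: funext => d.
rewrite /eop /expoplus /expst iter_pt.
case: (pselect (exists n : nat, d + m%:R = n%:R)) => [[n hn]|hno].
  rewrite (@lfsum_single _ _ n); last first.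
    by move=> k hk; rewrite /mono hn eqr_nat eq_sym (negbTE hk).
  rewrite (@lfsum_single _ _ n); last first.
    move=> k hk; rewrite /defbinom /mono.
    have -> : (d == k%:R - m%:R) = false.
      apply/negbTE; rewrite -subr_eq0 opprB addrA hn subr_eq0 eqr_nat.
      by rewrite eq_sym.
    by rewrite mul0r.
  have dE : d = n%:R - m%:R by rewrite -hn addrK.
  rewrite /defbinom /mono hn -dE !eqxx dE.
  rewrite -(@cpow_nat _ u _ nz) -cbin2_nat.
  have h := @core _ s t u m n%:R nz; rewrite (mulrA (PP _ _ _ _ _ _)) h /stbinom; ring.
rewrite (@lfsum_single _ _ 0); last first.
  move=> k _; rewrite /mono ifN //; apply/negP => /eqP e; apply: hno; by exists k.
rewrite (@lfsum_single _ _ 0); last first.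
  move=> k _; rewrite /defbinom /mono ifN ?mul0r //; apply/negP => /eqP e.
  by apply: hno; exists k; rewrite e subrK.
rewrite /mono ifN; last by apply/negP => /eqP e; apply: hno; exists 0%N.
rewrite /defbinom /mono ifN ?mul0r ?mulr0 //; apply/negP => /eqP e.
by apply: hno; exists 0%N; rewrite e subrK.
Qed.
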